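(* Let $K$ be a compact subset of a Banach space $X$, and let $\alpha>0$, $C_1>0$, $r>0$. If $d_n(K)_X\le C_1e^{-rn^\alpha}$ for all integers $n\ge0$, then there are constants $C_2,C_3>0$ depending only on $C_1$, $r$ and $\alpha$ such that $\varepsilon_n(K)_X\le C_2e^{-C_3n^{\alpha/(\alpha+1)}}$ for all $n\ge1$.
   Context: Kolmogorov $n$-width: $d_n(F)_X=\inf_{\dim V=n}\sup_{f\in F}\inf_{g\in V}\|f-g\|_X$ (infimum over $n$-dimensional subspaces $V\subset X$). Entropy numbers: $\varepsilon_n(F)_X=\inf\{\varepsilon>0: F\text{ is covered by }2^n\text{ balls of radius }\varepsilon\text{ in }X\}$. *)

(* Defs.v *)
From HB Require Import structures.
From mathcomp Require Import all_boot all_order all_algebra.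
From mathcomp Require Import all_classical all_reals all_analysis.
Set Implicit Arguments. Unset Strict Implicit. Unset Printing Implicit Defensive.
Import Order.TTheory GRing.Theory Num.Theory.
Import numFieldNormedType.Exports.
Local Open Scope classical_set_scope.
Local Open Scope ring_scope.

Section Widths.
Variables (R : realType) (X : normedModType R).

Definition lin_indep (n : nat) (v : 'I_n -> X) : Prop :=
  forall c : 'I_n -> R, \sum_(i < n) c i *: v i = 0 -> forall i, c i = 0.

Definition span_of (n : nat) (v : 'I_n -> X) : set X :=
  [set \sum_(i < n) c i *: v i | c in [set: 'I_n -> R]].

Definition subspaces_dim (n : nat) : set (set X) :=
  [set span_of v | v in [set v : 'I_n -> X | lin_indep v]].

Definition dist_to (f : X) (V : set X) : \bar R :=
  ereal_inf [set (`|f - g|)%:E | g in V].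

Definition kolmogorov_width (F : set X) (n : nat) : \bar R :=
  ereal_inf [set ereal_sup [set dist_to f V | f in F] | V in subspaces_dim n].

Definition covered_by (F : set X) (n : nat) (eps : R) : Prop :=
  exists c : 'I_(2 ^ n) -> X, forall f, F f -> exists i, `|f - c i| <= eps.

Definition entropy_number (F : set X) (n : nat) : \bar R :=
  ereal_inf [set eps%:E | eps in [set eps : R | 0 < eps /\ covered_by F n eps]].

End Widths.

(* Main.v *)
Require Import Defs.
From HB Require Import structures.
From mathcomp Require Import all_boot all_order all_algebra.
From mathcomp Require Import all_classical all_reals all_analysis.
Set Implicit Arguments. Unset Strict Implicit. Unset Printing Implicit Defensive.
Import Order.TTheory GRing.Theory Num.Theory.
Import numFieldNormedType.Exports.
Local Open Scope classical_set_scope.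
Local Open Scope ring_scope.
From mathcomp Require Import ring lra.
Set Warnings "-all".
Section S.
Variables (R : realType) (X : normedModType R).
Lemma sum_cont k (v : 'I_k -> X) :
  continuous (fun c : 'rV[R]_k => \sum_i c ord0 i *: v i).
Proof.
move=> c; apply: cvg_big.
- exact: add_continuous.
- exact: nbhs_filter.
move=> i _; apply: cvgZr_tmp; first exact: nbhs_filter.
exact: (@coord_continuous R 1 k ord0 i c).
Qed.
Lemma N_cont k (v : 'I_k -> X) :
  continuous (fun c : 'rV[R]_k => `|\sum_i c ord0 i *: v i|).
Proof.
move=> c; apply: continuous_comp; first exact: sum_cont.
exact: norm_continuous.
Qed.
Lemma entry_le_norm k (c : 'rV[R]_k) i : `|c ord0 i| <= `|c|.
Proof.
rewrite [leRHS]/Num.norm /= mx_normrE.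
apply/bigmax_geP; right => /=; exists (ord0, i) => //.
Qed.
Lemma const1_norm k : `|const_mx 1 : 'rV[R]_k.+1| = 1.
Proof.
apply/le_anti/andP; split.
  rewrite [leLHS]/Num.norm /= mx_normrE; apply: bigmax_le => // i _.
  by rewrite mxE normr1.
by have := entry_le_norm (const_mx 1 : 'rV[R]_k.+1) ord0; rewrite mxE normr1.
Qed.

Lemma dist_pos k (v : 'I_k.+1 -> X) : lin_indep v ->
  exists2 mu : R, 0 < mu & forall a : 'I_k -> R,
    mu <= `|v ord_max - \sum_(i < k) a i *: v (widen_ord (leqnSn k) i)|.
Proof.
move=> li.
pose N := fun c : 'rV[R]_k.+1 => `|\sum_i c ord0 i *: v i|.
pose S := [set c : 'rV[R]_k.+1 | `|c| = 1].
have S0 : S !=set0 by exists (const_mx 1); exact: const1_norm.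
have cS : compact S.
  apply: bounded_closed_compact.
    rewrite /= /bounded_near; near=> M; move=> x /= Hx; rewrite Hx.
    near: M; apply: nbhs_pinfty_ge; exact: num_real.
  have -> : S = Num.norm @^-1` [set 1] by [].
  apply: (proj1 (continuous_closedP _)); first exact: norm_continuous.
  exact: closed_eq.
have [c /set_mem Sc minc] := EVT_min_rV S0 cS (@continuous_subspaceT _ _ S N (@N_cont k.+1 v)).
exists (N c).
  rewrite lt_def normr_ge0 andbT normr_eq0; apply/negP => /eqP H.
  have c0 : c = 0.
    apply/matrixP => i j; rewrite (ord1 i) mxE; exact: li H j.
  by move: Sc; rewrite /S /= c0 normr0 => /esym/eqP; rewrite oner_eq0.
move=> a.
pose d := \row_(i < k.+1) (if unlift ord_max i is Some j then - a j else 1).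
have Nd : \sum_i d ord0 i *: v i =
   v ord_max - \sum_(i < k) a i *: v (widen_ord (leqnSn k) i).
  rewrite big_ord_recr /= mxE unlift_none scale1r addrC; congr (_ + _).
  rewrite -sumrN; apply: eq_bigr => i _.
  have -> : widen_ord (leqnSn k) i = lift ord_max i by apply: val_inj; rewrite /= /bump leqNgt ltn_ord.
  by rewrite mxE liftK scaleNr.
have d1 : 1 <= `|d| by have := entry_le_norm d ord_max; rewrite mxE unlift_none normr1.
have d0 : 0 < `|d| by apply: lt_le_trans d1.
have Sd : S (`|d|^-1 *: d).
  by rewrite /S /= normrZ ger0_norm ?invr_ge0 ?ltW // mulVf // gt_eqF.
have := minc _ (mem_set Sd).
have -> : N (`|d|^-1 *: d) = `|d|^-1 * N d.
  rewrite /N (_ : \sum_i _ = `|d|^-1 *: \sum_i d ord0 i *: v i).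
    by rewrite normrZ ger0_norm // invr_ge0 ltW.
  by rewrite scaler_sumr; apply: eq_bigr => i _; rewrite mxE scalerA.
rewrite -Nd => H.
apply: (le_trans _ (_ : `|d| * (`|d|^-1 * N d) <= N d)).
  rewrite -[leLHS]mul1r; apply: ler_pM => //; exact: normr_ge0.
by rewrite mulrA mulfV ?gt_eqF // mul1r.
Unshelve. all: by end_near.
Qed.
End S.
Section S.
Variables (R : realType) (X : normedModType R).
Lemma subr4 (V : zmodType) (a b c d : V) : (a - b) - (c - d) = (a - c) - (b - d).
Proof. by rewrite !opprB addrACA [RHS]addrACA [- c + _]addrC. Qed.

Definition cover (A : set X) (N : nat) (rho : R) :=
  exists s : seq X, (size s <= N)%N /\
    forall x, A x -> exists2 p, p \in s & `|x - p| <= rho.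

Lemma cover_sub A B N rho : A `<=` B -> cover B N rho -> cover A N rho.
Proof. by move=> AB [s [sz H]]; exists s; split => // x /AB /H. Qed.

Lemma cover_union (N M : nat) (B : nat -> set X) rho :
  (forall j, (j < N)%N -> cover (B j) M rho) ->
  cover [set x | exists2 j, (j < N)%N & B j x] (N * M) rho.
Proof.
elim: N => [|N IH] H.
  by exists [::]; split => // x [j].
have [s1 [sz1 c1]] := IH (fun j lt => H j (leq_trans lt (leqnSn N))).
have [s2 [sz2 c2]] := H N (ltnSn N).
exists (s2 ++ s1); split.
  by rewrite size_cat mulSn leq_add.
move=> x [j]; rewrite ltnS leq_eqVlt => /orP[/eqP -> Bx|jN Bx].
  by have [p ps xp] := c2 _ Bx; exists p => //; rewrite mem_cat ps.
have [p ps xp] := c1 x (ex_intro2 _ _ j jN Bx).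
by exists p => //; rewrite mem_cat ps orbT.
Qed.

Lemma lin_indep_widen k (v : 'I_k.+1 -> X) : lin_indep v ->
  lin_indep (fun i : 'I_k => v (widen_ord (leqnSn k) i)).
Proof.
move=> li c H i.
have wl : forall j : 'I_k, widen_ord (leqnSn k) j = lift ord_max j.
  by move=> j; apply: val_inj; rewrite /= /bump leqNgt ltn_ord.
pose c' := fun j : 'I_k.+1 => if unlift ord_max j is Some j' then c j' else 0.
have := li c' _ (widen_ord (leqnSn k) i).
rewrite /c' wl liftK; apply.
rewrite big_ord_recr /= unlift_none scale0r addr0 -[RHS]H.
by apply: eq_bigr => j _; rewrite wl liftK.
Qed.

Lemma cover_span k : forall (v : 'I_k -> X) (A : set X) (D h : R) (G : nat),
  lin_indep v -> 0 < h -> 0 <= D -> A `<=` span_of v ->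
  (forall x y, A x -> A y -> `|x - y| <= D) ->
  4 * (D + 2 * k%:R * h) / h < G%:R ->
  cover A (G ^ k) (k%:R * h).
Proof.
elim: k => [|k IH] v A D h G li h0 D0 Asp Adiam HG.
  exists [:: 0]; split => // x /Asp [c _ <-].
  by exists 0; rewrite ?inE // big_ord0 subr0 normr0 mul0r.
set v' := fun i : 'I_k => v (widen_ord (leqnSn k) i).
have li' : lin_indep v' := lin_indep_widen li.
have [mu mu0 Hmu] := dist_pos li.
pose S := [set `|v ord_max - \sum_(i < k) a i *: v' i| | a in [set: 'I_k -> R]].
have S0 : S !=set0 by exists `|v ord_max - \sum_(i<k) 0 *: v' i|; exists (fun=> 0).
have Slb : lbound S mu by move=> _ [a _ <-]; exact: Hmu.
have hinf : has_inf S by split => //; exists mu.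
have muinf : mu <= inf S := lb_le_inf S0 Slb.
have inf0 : 0 < inf S := lt_le_trans mu0 muinf.
have [_ [a0 _ <-] Ha0] := inf_adherent inf0 hinf.
set w0 := \sum_(i < k) a0 i *: v' i.
set rho0 := `|v ord_max - w0|.
have rho0_pos : 0 < rho0 := lt_le_trans mu0 (Hmu a0).
set e := rho0^-1 *: (v ord_max - w0).
have ne : `|e| = 1.
  by rewrite /e normrZ ger0_norm ?invr_ge0 ?ltW // mulVf // gt_eqF.
pose tt (c : 'I_k.+1 -> R) := c ord_max * rho0.
pose ww (c : 'I_k.+1 -> R) :=
  \sum_(i < k) (c (widen_ord (leqnSn k) i) + c ord_max * a0 i) *: v' i.
have decomp c : \sum_i c i *: v i = ww c + tt c *: e.
  have -> : ww c = \sum_(i < k) c (widen_ord (leqnSn k) i) *: v' i + c ord_max *: w0.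
    by rewrite /ww /w0 scaler_sumr -big_split; apply: eq_bigr => i _; rewrite scalerDl scalerA.
  rewrite big_ord_recr /= /tt /e scalerA -mulrA mulfV ?gt_eqF // mulr1.
  by rewrite scalerBr addrAC addrA subrK.
have tbound c : `|tt c| <= 2 * `|\sum_i c i *: v i|.
  have [c0|cn0] := eqVneq (c ord_max) 0.
    by rewrite /tt c0 mul0r normr0 mulr_ge0.
  have -> : \sum_i c i *: v i = c ord_max *: (v ord_max -
      \sum_(i < k) (- (c (widen_ord (leqnSn k) i) / c ord_max)) *: v' i).
    rewrite big_ord_recr /= addrC scalerBr scaler_sumr; congr (_ + _).
    rewrite -sumrN; apply: eq_bigr => i _.
    by rewrite scalerA mulrN scaleNr opprK mulrC -mulrA mulVf // mulr1.
  rewrite !normrZ (ger0_norm (ltW rho0_pos)) mulrCA.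
  rewrite ler_wpM2l //.
  apply: le_trans (ltW Ha0) _.
  rewrite -mulr2n -[_ *+ 2]mulr_natl; apply: ler_wpM2l => //.
  by apply: ge_inf; [exists mu | exists (fun i => - (c (widen_ord (leqnSn k) i) / c ord_max))].
have [[x0 Ax0]|A0] := pselect (A !=set0); last first.
  by exists [::]; split => // x Ax; exfalso; apply: A0; exists x.
have [c0 _ x0E] := Asp _ Ax0.
pose a := tt c0 - 2 * D.
pose tau (j : nat) := a + j%:R * h.
pose Aj (j : nat) := [set x | A x /\ exists c, \sum_i c i *: v i = x /\ `|tt c - tau j| <= h].
have diffE c1 c2 : \sum_i c1 i *: v i - \sum_i c2 i *: v i =
    \sum_i (c1 i - c2 i) *: v i.
  by rewrite -sumrB; apply: eq_bigr => i _; rewrite scalerBl.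
have ttB c1 c2 : tt (fun i => c1 i - c2 i) = tt c1 - tt c2 by rewrite /tt mulrBl.
have ttdiff c1 c2 : A (\sum_i c1 i *: v i) -> A (\sum_i c2 i *: v i) ->
    `|tt c1 - tt c2| <= 2 * D.
  move=> A1 A2; rewrite -ttB; apply: le_trans (tbound _) _.
  rewrite -diffE ler_wpM2l //; exact: Adiam.
have cov1 : A `<=` [set x | exists2 j, (j < G)%N & Aj j x].
  move=> x Ax; have [c _ xE] := Asp _ Ax.
  have := ttdiff c c0; rewrite xE x0E => /(_ Ax Ax0).
  rewrite ler_norml => /andP[Hd1 Hd2].
  have ta0 : 0 <= (tt c - a) / h.
    apply: divr_ge0; last exact: ltW.
    rewrite /a; lra.
  have j1 := truncn_le ((tt c - a) / h); rewrite ta0 in j1.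
  have j2 := truncnS_gt ((tt c - a) / h).
  have yh : (tt c - a) / h * h = tt c - a by rewrite divfK // gt_eqF.
  exists (Num.truncn ((tt c - a) / h)).
    rewrite -(ltr_nat R); apply: le_lt_trans j1 _; apply: le_lt_trans HG.
    rewrite ler_pM2r ?invr_gt0 //.
    have : 0 <= k.+1%:R * h by rewrite mulr_ge0 // ltW.
    rewrite /a; lra.
  split => //; exists c; split => //.
  rewrite /tau; move: j2; rewrite -natr1.
  set J := (Num.truncn _)%:R => j2.
  rewrite ler_norml; apply/andP; split; nra.
have cov2 j : cover (Aj j) (G ^ k) (k.+1%:R * h).
  pose Bj := [set y | exists c, A (\sum_i c i *: v i) /\
     `|tt c - tau j| <= h /\ y = ww c].
  have B0 : 0 <= D + 2 * h by lra.
  have Bsp : Bj `<=` span_of v'.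
    move=> _ [c [_ [_ ->]]].
    by exists (fun i => c (widen_ord (leqnSn k) i) + c ord_max * a0 i).
  have Bdiam : forall y1 y2, Bj y1 -> Bj y2 -> `|y1 - y2| <= D + 2 * h.
    move=> _ _ [c1 [A1 [t1 ->]]] [c2 [A2 [t2 ->]]].
    have w1E : ww c1 = \sum_i c1 i *: v i - tt c1 *: e by rewrite decomp addrK.
    have w2E : ww c2 = \sum_i c2 i *: v i - tt c2 *: e by rewrite decomp addrK.
    rewrite w1E w2E subr4 -scalerBl.
    apply: le_trans (ler_normB _ _) _; apply: lerD; first exact: Adiam.
    rewrite normrZ ne mulr1.
    have := ler_normB (tt c1 - tau j) (tt c2 - tau j).
    rewrite opprB addrA subrK; lra.
  have HG' : 4 * (D + 2 * h + 2 * k%:R * h) / h < G%:R.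
    by rewrite (_ : D + 2 * h + 2 * k%:R * h = D + 2 * k.+1%:R * h) // -addn1 natrD; ring.
  have [s [sz cs]] := IH v' Bj (D + 2 * h) h G li' h0 B0 Bsp Bdiam HG'.
  exists [seq p + tau j *: e | p <- s]; split; first by rewrite size_map.
  move=> x [Ax [c [xE tj]]].
  have By : Bj (ww c) by exists c; rewrite xE.
  have [p ps yp] := cs _ By.
  exists (p + tau j *: e); first exact: map_f.
  rewrite -xE decomp opprD addrACA -scalerBl.
  apply: le_trans (ler_normD _ _) _; rewrite normrZ ne mulr1.
  by rewrite -addn1 natrD mulrDl mul1r; exact: lerD.
apply: cover_sub cov1 _; rewrite expnS; exact: cover_union.
Qed.
End S.
Lemma count_bound (R : realType) (alpha r : R) (m n : nat) :
  0 < alpha -> 0 < r -> (1 <= m)%N ->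
  (24 + alpha^-1 + r) * m%:R `^ (alpha + 1) <= n%:R * ln 2 ->
  ((Num.truncn (24 * m%:R / expR (- r * m%:R `^ alpha))).+1 ^ m <= 2 ^ n)%N.
Proof.
move=> a0 r0 m1 HB.
set M : R := m%:R; set P := M `^ alpha.
have M1 : 1 <= M by rewrite /M ler1n.
have M0 : 0 < M by lra.
have P1 : 1 <= P by rewrite /P -(powRr0 M) ler_powR // ltW.
have lnM : M <= expR (P / alpha).
  rewrite -{1}(lnK (x:=M)) ?posrE // ler_expR.
  have lP : ln P = alpha * ln M by rewrite /P ln_powR.
  have : ln P < P by apply: ln_sublinear; lra.
  by rewrite lP ler_pdivlMr // mulrC => /ltW.
set B := 24 + alpha^-1 + r.
have E0 : 0 < expR (- r * P) := expR_gt0 _.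
have Gb : ((Num.truncn (24 * M / expR (- r * P))).+1%:R : R) <= expR (B * P).
  rewrite -natr1.
  have T1 : (Num.truncn (24 * M / expR (- r * P)))%:R <= 24 * M / expR (- r * P).
    by rewrite truncn_le; apply: divr_ge0; [apply: mulr_ge0; lra | exact: ltW].
  apply: le_trans (_ : 24 * M / expR (- r * P) + 1 <= _); first by rewrite lerD2r.
  rewrite mulNr expRN invrK.
  have e24 : (25 : R) <= expR 24 by have := expR_ge1Dx (24 : R); lra.
  have eM : M * expR (r * P) >= 1.
    have e1 : 1 <= expR (r * P) by rewrite -expR0 ler_expR; apply: mulr_ge0; lra.
    rewrite -[1]mul1r; apply: ler_pM => //.
  apply: le_trans (_ : 25 * (M * expR (r * P)) <= _); first by lra.
  apply: le_trans (_ : expR 24 * (expR (P / alpha) * expR (r * P)) <= _).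
    by rewrite ler_pM // ?mulr_ge0 // ?ler_pM // ltW // expR_gt0.
  rewrite -!expRD ler_expR /B !mulrDl.
  rewrite [alpha^-1 * P]mulrC; lra.
rewrite -(ler_nat R) !natrX.
apply: le_trans (_ : expR (B * P) ^+ m <= _).
  by rewrite lerXn2r // ?nnegrE // ltW // expR_gt0.
rewrite -expRM_natl -[2 in X in _ <= X](lnK (x:=2)) ?posrE // -expRM_natl ler_expR.
apply: le_trans HB; rewrite -/B -/M mulrCA (powRD (x:=M)) ?(gt_eqF M0) ?implybT //.
by rewrite (powRr1 (ltW M0)) -/P [P * M]mulrC.
Qed.
Section S.
Variables (R : realType) (X : normedModType R).
Lemma width_approx (K : set X) m (a : R) : 0 < a ->
  (kolmogorov_width K m <= a%:E)%E ->
  exists v : 'I_m -> X, lin_indep v /\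
    forall f, K f -> exists c : 'I_m -> R, `|f - \sum_i c i *: v i| < 2 * a.
Proof.
move=> a0 Hk.
have : (kolmogorov_width K m < (2 * a)%:E)%E.
  by apply: le_lt_trans Hk _; rewrite lte_fin; lra.
move=> /ereal_inf_lt [_ [V [v li <-] <-] Hs].
exists v; split => // f Kf.
have : (dist_to f (span_of v) < (2 * a)%:E)%E.
  apply: le_lt_trans Hs; apply: ereal_sup_ubound; by exists f.
move=> /ereal_inf_lt [_ [g [c _ <-] <-]]; rewrite lte_fin => H.
by exists c.
Qed.
End S.

Unset Implicit Arguments.
Lemma entropy_of_cover (R : realType) (X : normedModType R) (K : set X) n
    (s : seq X) eps :
  0 < eps -> (size s <= 2 ^ n)%N ->
  (forall f, K f -> exists2 p, p \in s & `|f - p| <= eps) ->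
  (entropy_number K n <= eps%:E)%E.
Proof.
move=> e0 sz H; apply: ereal_inf_lbound; exists eps => //; split => //.
exists (fun i => nth 0 s i) => f Kf.
have [p ps fp] := H f Kf.
have ix : (index p s < 2 ^ n)%N by apply: leq_trans sz; rewrite index_mem.
by exists (Ordinal ix); rewrite /= nth_index.
Qed.

Theorem theorem4p5 (R : realType) (alpha C1 r : R) :
  0 < alpha -> 0 < C1 -> 0 < r ->
  exists C2 C3 : R, 0 < C2 /\ 0 < C3 /\
    forall (X : completeNormedModType R) (K : set X),
      compact K ->
      (forall n : nat,
         (kolmogorov_width K n <= (C1 * expR (- r * (n%:R `^ alpha)))%:E)%E) ->
      forall n : nat, (1 <= n)%N ->
        (entropy_number K n <=
           (C2 * expR (- C3 * (n%:R `^ (alpha / (alpha + 1)))))%:E)%E.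
Proof.
move=> a0 C10 r0.
set B := 24 + alpha^-1 + r.
have B0 : 0 < B by rewrite /B; have := invr_gt0 alpha; rewrite a0 => ?; lra.
set beta := alpha / (alpha + 1).
have beta0 : 0 <= beta by rewrite /beta divr_ge0 //; lra.
set q := (2^-1 : R) `^ alpha.
have ln20 : 0 < ln (2 : R) by apply: ln_gt0; lra.
set C3 := r * q * (ln 2 / B) `^ beta.
have q0 : 0 < q by rewrite /q powR_gt0 // invr_gt0.
have q1 : q <= 1.
  have : q <= 1 `^ alpha.
    by rewrite /q ge0_ler_powR // ?nnegrE; lra.
  by rewrite powR1.
exists (4 * C1 * expR r), C3; split; first by rewrite !mulr_gt0 // expR_gt0.
split; first by rewrite /C3 !mulr_gt0 // powR_gt0 // divr_gt0.
move=> X K _ HK n n1.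
have HK0 : (kolmogorov_width K 0 <= C1%:E)%E.
  by move: (HK 0%N); rewrite mulr0n powR0 ?gt_eqF // mulr0 expR0 mulr1.
have [v0 [_ H0]] := @width_approx _ _ K 0 C1 C10 HK0.
have Kb f : K f -> `|f| < 2 * C1.
  by move=> Kf; have [c] := H0 f Kf; rewrite big_ord0 subr0.
have triv : (entropy_number K n <= (2 * C1)%:E)%E.
  apply: (@entropy_of_cover _ _ _ _ [:: 0]); first by rewrite mulr_gt0.
    by rewrite /= expn_gt0.
  by move=> f Kf; exists 0; rewrite ?inE // subr0 ltW // Kb.
set z := n%:R * (ln 2 / B).
have z0 : 0 <= z by rewrite mulr_ge0 // ltW // divr_gt0.
have C3n : C3 * n%:R `^ beta = r * q * z `^ beta.
  rewrite /z powRM ?ler0n //; last exact/ltW/divr_gt0.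
  rewrite /C3; ring.
have [z1|z1] := ltP z 1.
  apply: le_trans triv _; rewrite lee_fin.
  have zb : z `^ beta <= 1.
    have : z `^ beta <= 1 `^ beta by rewrite ge0_ler_powR // ?nnegrE //; lra.
    by rewrite powR1.
  have : C3 * n%:R `^ beta <= r.
    rewrite C3n -[leRHS]mulr1 -mulrA; apply: ler_wpM2l; first exact: ltW.
    rewrite -[leRHS]mulr1; apply: ler_pM => //; [exact: ltW | exact: powR_ge0].
  move=> Hr.
  have : 1 <= expR r * expR (- C3 * n%:R `^ beta).
    by rewrite -expRD mulNr; apply: le_trans (expR_ge1Dx _); lra.
  move=> He; rewrite -mulrA; apply: le_trans (_ : 4 * C1 * 1 <= _).
    lra.
  by rewrite ler_pM2l // mulr_gt0.
set y := z `^ (alpha + 1)^-1.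
have a10 : 0 < alpha + 1 by lra.
have y1 : 1 <= y.
  have : 1 `^ (alpha + 1)^-1 <= y.
    by rewrite /y ge0_ler_powR // ?nnegrE ?invr_ge0 //; lra.
  by rewrite powR1.
have y0 : 0 <= y by lra.
set m := Num.truncn y.
have m1 : (1 <= m)%N by rewrite /m truncn_ge_nat.
have mley : m%:R <= y by rewrite /m truncn_le.
have ylt : y < m%:R + 1 by rewrite natr1 /m; exact: truncnS_gt.
have M1 : 1 <= (m%:R : R) by rewrite ler1n.
have yz : y `^ (alpha + 1) = z.
  by rewrite /y -powRrM mulVf ?gt_eqF // powRr1.
have Bm : B * m%:R `^ (alpha + 1) <= n%:R * ln 2.
  have : m%:R `^ (alpha + 1) <= z.
    by rewrite -yz ge0_ler_powR // ?nnegrE //; lra.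
  rewrite /z => H.
  apply: le_trans (_ : B * (n%:R * (ln 2 / B)) <= _).
    by apply: ler_wpM2l => //; exact: ltW.
  rewrite (_ : B * (n%:R * (ln 2 / B)) = n%:R * ln 2) //.
  by field; rewrite gt_eqF.
have cnt := count_bound a0 r0 m1 Bm.
have mlow : y / 2 <= m%:R by lra.
have Hpow : C3 * n%:R `^ beta <= r * m%:R `^ alpha.
  rewrite C3n -mulrA; apply: ler_wpM2l; first exact: ltW.
  have : (y / 2) `^ alpha <= m%:R `^ alpha.
    by rewrite ge0_ler_powR // ?nnegrE //; lra.
  have ey : y `^ alpha = z `^ beta by rewrite /y -powRrM /beta mulrC.
  rewrite powRM //.
  by rewrite ey -/q mulrC.
set E := expR (- r * m%:R `^ alpha).
set a := C1 * E.
have E0 : 0 < E := expR_gt0 _.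
have E1 : E <= 1.
  rewrite /E -[X in _ <= X]expR0 ler_expR mulNr oppr_le0.
  by apply: mulr_ge0; [lra | exact: powR_ge0].
have a0' : 0 < a := mulr_gt0 C10 E0.
have aC1 : a <= C1 by rewrite /a -[leRHS]mulr1 ler_wpM2l // ltW.
have [v [li Hv]] := @width_approx _ _ K m a a0' (HK m).
pose A := [set g | span_of v g /\ exists2 f, K f & `|f - g| < 2 * a].
have mpos : 0 < (m%:R : R) by lra.
set h := 2 * a / m%:R.
have h0 : 0 < h by rewrite /h divr_gt0 // mulr_gt0.
have Adiam : forall x y, A x -> A y -> `|x - y| <= 8 * C1.
  have gb : forall g, A g -> `|g| <= 4 * C1.
    move=> g [_ [f Kf fg]].
    have -> : g = f - (f - g) by rewrite opprB addrC subrK.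
    apply: le_trans (ler_normB _ _) _; have := Kb f Kf; lra.
  move=> x1 x2 A1 A2; apply: le_trans (ler_normB _ _) _.
  by have := gb _ A1; have := gb _ A2; lra.
set G := (Num.truncn (24 * m%:R / E)).+1.
have HG : 4 * (8 * C1 + 2 * m%:R * h) / h < G%:R.
  have e1 : 1 <= E^-1 by rewrite invf_ge1.
  have -> : 4 * (8 * C1 + 2 * m%:R * h) / h = (16 * E^-1 + 8) * m%:R.
    by rewrite /h /a; field; rewrite !gt_eqF.
  apply: le_lt_trans (truncnS_gt _).
  rewrite mulrAC; nra.
have D0 : 0 <= 8 * C1 by lra.
have Asp : A `<=` span_of v by move=> g [].
have [s [sz cs]] := cover_span li h0 D0 Asp Adiam HG.
have mh : m%:R * h = 2 * a by rewrite /h mulrC divfK // gt_eqF.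
apply: le_trans (_ : (entropy_number K n <= (4 * a)%:E)%E) _.
  apply: (@entropy_of_cover _ _ _ _ s); first by rewrite mulr_gt0.
    exact: leq_trans sz cnt.
  move=> f Kf; have [c Hc] := Hv f Kf.
  have Ag : A (\sum_i c i *: v i) by split; [exists c | exists f].
  have [p ps gp] := cs _ Ag.
  exists p => //.
  have -> : f - p = (f - \sum_i c i *: v i) + (\sum_i c i *: v i - p).
    by rewrite addrA subrK.
  apply: le_trans (ler_normD _ _) _; rewrite mh in gp; lra.
rewrite lee_fin /a /E.
have He : expR (- r * m%:R `^ alpha) <= expR r * expR (- C3 * n%:R `^ beta).
  by rewrite -expRD ler_expR !mulNr; lra.
rewrite -!mulrA; apply: ler_wpM2l; first lra.
by apply: ler_wpM2l; first lra.
Qed.
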